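(* For every finite set $\Gamma$ and formula $A$ of the propositional language $\mathcal{L}_p$: (i) $\Gamma\vdash_{\mathbf{KPC}}A$ iff $\Gamma\vdash_{i\mathbf{STL}}A$ iff $i\mathbf{ST}\vDash\Gamma\Rightarrow A$ iff $\mathbf{K}\vDash\Gamma\Rightarrow A$; (ii) $\Gamma\vdash_{\mathbf{EKPC}}A$ iff $\Gamma\vdash_{i\mathbf{STL}(wF)}A$ iff $i\mathbf{ST}(wF)\vDash\Gamma\Rightarrow A$ iff $\mathbf{K}(wF)\vDash\Gamma\Rightarrow A$; (iii) $\Gamma\vdash_{\mathbf{KTPC}}A$ iff $\Gamma\vdash_{i\mathbf{STL}(F)}A$ iff $i\mathbf{ST}(F)\vDash\Gamma\Rightarrow A$ iff $\mathbf{K}(F)\vDash\Gamma\Rightarrow A$; (iv) $\Gamma\vdash_{\mathbf{BPC}}A$ iff $\Gamma\vdash_{i\mathbf{STL}(P)}A$ iff $i\mathbf{ST}(P)\vDash\Gamma\Rightarrow A$ iff $\mathbf{K}(P)\vDash\Gamma\Rightarrow A$; (v) $\Gamma\vdash_{\mathbf{EBPC}}A$ iff $\Gamma\vdash_{i\mathbf{STL}(P,wF)}A$ iff $i\mathbf{ST}(P,wF)\vDash\Gamma\Rightarrow A$ iff $\mathbf{K}(P,wF)\vDash\Gamma\Rightarrow A$; (vi) $\Gamma\vdash_{\mathbf{IPC}}A$ iff $\Gamma\vdash_{i\mathbf{STL}(P,F)}A$ iff $i\mathbf{ST}(P,F)\vDash\Gamma\Rightarrow A$ iff $\mathbf{K}(P,F)\vDash\Gamma\Rightarrow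 A$.
   Context: $\mathcal{L}_p$ has variables, $\top,\bot$, $\wedge,\vee,\to$; $\mathcal{L}_\nabla$ extends it by the constant $1$, binary $\otimes$ and unary $\nabla$. Sub-intuitionistic logics (judgements $\Gamma\vdash A$, $\Gamma$ a finite set): $\mathbf{KPC}$ has the assumption rule ($\Gamma\vdash A$ for $A\in\Gamma$) and rules (premises / conclusion): $\Gamma\vdash\top$; $\Gamma\vdash\bot$ / $\Gamma\vdash A$; $\vee E$: $\Gamma\vdash A\vee B$, $\Gamma,A\vdash C$, $\Gamma,B\vdash C$ / $\Gamma\vdash C$; $\vee I$: $\Gamma\vdash A_i$ / $\Gamma\vdash A_0\vee A_1$; $\wedge E$: $\Gamma\vdash A_0\wedge A_1$ / $\Gamma\vdash A_i$; $\wedge I$: $\Gamma\vdash A$, $\Gamma\vdash B$ / $\Gamma\vdash A\wedge B$; $\to I$: $A\vdash B$ / $\Gamma\vdash A\to B$; $(\wedge I)_f$: $\Gamma\vdash A\to B$, $\Gamma\vdash A\to C$ / $\Gamma\vdash A\to B\wedge C$; $(\vee E)_f$: $\Gamma\vdash A\to C$, $\Gamma\vdash B\to C$ / $\Gamma\vdash A\vee B\to C$; $tr_f$: $\Gamma\vdash A\to B$, $\Gamma\vdash B\to C$ / $\Gamma\vdash A\to C$. Additional rules: $E$: $\Gamma\vdash\top\to\bot$ / $\Gamma\vdash\bot$; $MP$: $\Gamma\vdash A$, $\Gamma\vdash A\to B$ / $\Gamma\vdash B$; $Cur$: $\Gamma\vdash A$ / $\Gamma\vdash\top\to A$. $\mathbf{BPC}=\mathbf{KPC}+Cur$,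 $\mathbf{EKPC}=\mathbf{KPC}+E$, $\mathbf{EBPC}=\mathbf{BPC}+E$, $\mathbf{KTPC}=\mathbf{KPC}+MP$, $\mathbf{IPC}=\mathbf{BPC}+MP$. Sequent logics (sequents $\Gamma\Rightarrow A$, $\Gamma$ a finite sequence, $\nabla\Gamma$ applying $\nabla$ to each member): $\mathbf{STL}$ has axioms $A\Rightarrow A$, $\Rightarrow1$, $\nabla1\Rightarrow1$, $\Gamma\Rightarrow\top$, $\Gamma,\bot,\Sigma\Rightarrow A$ and rules: cut: $\Gamma\Rightarrow A$, $\Pi,A,\Sigma\Rightarrow B$ / $\Pi,\Gamma,\Sigma\Rightarrow B$; $L\wedge$: $\Gamma,A,\Sigma\Rightarrow C$ / $\Gamma,A\wedge B,\Sigma\Rightarrow C$ and $\Gamma,B,\Sigma\Rightarrow C$ / $\Gamma,A\wedge B,\Sigma\Rightarrow C$; $R\wedge$: $\Gamma\Rightarrow A$, $\Gamma\Rightarrow B$ / $\Gamma\Rightarrow A\wedge B$; $L\vee$: $\Gamma,A,\Sigma\Rightarrow C$, $\Gamma,B,\Sigma\Rightarrow C$ / $\Gamma,A\vee B,\Sigma\Rightarrow C$; $R\vee$: $\Gamma\Rightarrow A$ / $\Gamma\Rightarrow A\vee B$ and $\Gamma\Rightarrow B$ / $\Gamma\Rightarrow A\vee B$; $L1$: $\Gamma,\Sigma\Rightarrow A$ / $\Gamma,1,\Sigma\Rightarrow A$; $L\otimes$: $\Gamma,A,B,\Sigma\Rightarrow C$ / $\Gamma,A\otimes B,\Sigma\Rightarrow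 C$; $R\otimes$: $\Gamma\Rightarrow A$, $\Sigma\Rightarrow B$ / $\Gamma,\Sigma\Rightarrow A\otimes B$; $(\nabla)$: $A\Rightarrow B$ / $\nabla A\Rightarrow\nabla B$; Oplax: $\nabla A,\nabla B\Rightarrow C$ / $\nabla(A\otimes B)\Rightarrow C$; $L\to$: $\Gamma\Rightarrow A$, $\Pi,B,\Sigma\Rightarrow C$ / $\Pi,\Gamma,\nabla(A\to B),\Sigma\Rightarrow C$; $R\to$: $A,\nabla\Gamma\Rightarrow B$ / $\Gamma\Rightarrow A\to B$. Schemes: $(P)$: $\Gamma\Rightarrow\nabla A$ / $\Gamma\Rightarrow A$; $(F)$: $\Gamma\Rightarrow A$ / $\Gamma\Rightarrow\nabla A$; $(wF)$: $\nabla A\Rightarrow\bot$ / $A\Rightarrow\bot$. $i\mathbf{STL}(\mathcal{R})$ is $\mathbf{STL}$ plus the schemes in $\mathcal{R}$ plus left weakening, contraction and exchange ($i\mathbf{STL}=i\mathbf{STL}(\emptyset)$). Topological semantics: a spacetime is $(\mathscr{X},\nabla)$ with $\mathscr{X}$ a locale and $\nabla$ join preserving; its implication $\to$ is characterized by $a\wedge\nabla b\le c$ iff $b\le a\to c$. Valuations send variables into $\mathscr{X}$ and extend by $1,\top\mapsto$ top, $\bot\mapsto$ bottom, $\wedge,\otimes\mapsto\wedge$, $\vee\mapsto\vee$, $\nabla\mapsto\nabla$, $\to\mapsto\to$; $\Gamma\Rightarrow A$ holds if the meet of the values of $\Gamma$ is below the value of $A$. $i\mathbf{ST}(\mathcal{R})$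 is the class of spacetimes with $\nabla a\le a$ for all $a$ (if $P\in\mathcal{R}$), $a\le\nabla a$ (if $F\in\mathcal{R}$), $\nabla a=0\Rightarrow a=0$ (if $wF\in\mathcal{R}$); $i\mathbf{ST}\vDash$ means validity under all valuations in all spacetimes of the class. Kripke semantics: a Kripke model is $(W,\le,R,V)$ with $(W,\le)$ a poset, $R\subseteq W\times W$ such that $(u,v)\in R$, $u'\le u$, $v\le v'$ imply $(u',v')\in R$, $V$ assigning upsets to variables; forcing: $\top,1$ always, $\bot$ never, $\wedge,\otimes$ as conjunction, $\vee$ as disjunction, $w\Vdash A\to B$ iff for all $v$ with $(w,v)\in R$, $v\Vdash A$ implies $v\Vdash B$, $w\Vdash\nabla A$ iff some $v$ with $(v,w)\in R$ forces $A$. $\mathbf{K}(\mathcal{R})\vDash\Gamma\Rightarrow A$ means in every Kripke model satisfying the conditions ($P$: $R\subseteq\le$; $F$: $R$ reflexive; $wF$: $R$ serial) for schemes in $\mathcal{R}$, every world forcing all of $\Gamma$ forces $A$; $\mathbf{K}$ is the class of all Kripke models. *)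

(* Defs.v *)
From Stdlib Require Import List.
Import ListNotations.
Set Implicit Arguments.

Inductive pform : Type :=
| PVar : nat -> pform
| PTop : pform
| PBot : pform
| PAnd : pform -> pform -> pform
| POr  : pform -> pform -> pform
| PImp : pform -> pform -> pform.

Inductive form : Type :=
| Var  : nat -> form
| Top  : form
| Bot  : form
| One  : form
| And  : form -> form -> form
| Or   : form -> form -> form
| Imp  : form -> form -> form
| Tens : form -> form -> form
| Nab  : form -> form.

Fixpoint emb (A : pform) : form :=
  match A with
  | PVar n => Var n
  | PTop => Top
  | PBot => Bot
  | PAnd A B => And (emb A) (emb B)
  | POr A B => Or (emb A) (emb B)
  | PImp A B => Imp (emb A) (emb B)
  end.

Record ndlogic := NDLogic { ruleE : bool; ruleMP : bool; ruleCur : bool }.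

Definition KPC  := NDLogic false false false.
Definition EKPC := NDLogic true  false false.
Definition KTPC := NDLogic false true  false.
Definition BPC  := NDLogic false false true.
Definition EBPC := NDLogic true  false true.
Definition IPC  := NDLogic false true  true.

(* Contexts are finite sets, represented by lists (only membership matters);
   "Gamma, A" is A :: Gamma. *)
Inductive nd (L : ndlogic) : list pform -> pform -> Prop :=
| nd_ax : forall G A, In A G -> nd L G A
| nd_top : forall G, nd L G PTop
| nd_bot : forall G A, nd L G PBot -> nd L G A
| nd_orE : forall G A B C, nd L G (POr A B) -> nd L (A :: G) C -> nd L (B :: G) C ->
    nd L G C
| nd_orI0 : forall G A B, nd L G A -> nd L G (POr A B)
| nd_orI1 : forall G A B, nd L G B -> nd L G (POr A B)
| nd_andE0 : forall G A B, nd L G (PAnd A B) -> nd L G A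
| nd_andE1 : forall G A B, nd L G (PAnd A B) -> nd L G B
| nd_andI : forall G A B, nd L G A -> nd L G B -> nd L G (PAnd A B)
| nd_impI : forall G A B, nd L [A] B -> nd L G (PImp A B)
| nd_andIf : forall G A B C, nd L G (PImp A B) -> nd L G (PImp A C) ->
    nd L G (PImp A (PAnd B C))
| nd_orEf : forall G A B C, nd L G (PImp A C) -> nd L G (PImp B C) ->
    nd L G (PImp (POr A B) C)
| nd_trf : forall G A B C, nd L G (PImp A B) -> nd L G (PImp B C) -> nd L G (PImp A C)
| nd_E : forall G, ruleE L = true -> nd L G (PImp PTop PBot) -> nd L G PBot
| nd_MP : forall G A B, ruleMP L = true -> nd L G A -> nd L G (PImp A B) -> nd L G B
| nd_Cur : forall G A, ruleCur L = true -> nd L G A -> nd L G (PImp PTop A).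

Record schemes := Schemes { hasP : bool; hasF : bool; haswF : bool }.

Definition R_none := Schemes false false false.
Definition R_wF   := Schemes false false true.
Definition R_F    := Schemes false true  false.
Definition R_P    := Schemes true  false false.
Definition R_PwF  := Schemes true  false true.
Definition R_PF   := Schemes true  true  false.

Definition nabs (G : list form) : list form := map Nab G.

Inductive stl (R : schemes) : list form -> form -> Prop :=
| s_id : forall A, stl R [A] A
| s_one : stl R [] One
| s_nabone : stl R [Nab One] One
| s_top : forall G, stl R G Top
| s_bot : forall G S A, stl R (G ++ Bot :: S) A
| s_cut : forall G P S A B, stl R G A -> stl R (P ++ A :: S) B -> stl R (P ++ G ++ S) B
| s_Land0 : forall G A B S C, stl R (G ++ A :: S) C -> stl R (G ++ And A B :: S) C
| s_Land1 : forall G A B S C, stl R (G ++ B :: S) C -> stl R (G ++ And A B :: S) C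
| s_Rand : forall G A B, stl R G A -> stl R G B -> stl R G (And A B)
| s_Lor : forall G A B S C, stl R (G ++ A :: S) C -> stl R (G ++ B :: S) C ->
    stl R (G ++ Or A B :: S) C
| s_Ror0 : forall G A B, stl R G A -> stl R G (Or A B)
| s_Ror1 : forall G A B, stl R G B -> stl R G (Or A B)
| s_L1 : forall G S A, stl R (G ++ S) A -> stl R (G ++ One :: S) A
| s_Ltens : forall G A B S C, stl R (G ++ A :: B :: S) C -> stl R (G ++ Tens A B :: S) C
| s_Rtens : forall G S A B, stl R G A -> stl R S B -> stl R (G ++ S) (Tens A B)
| s_nab : forall A B, stl R [A] B -> stl R [Nab A] (Nab B)
| s_oplax : forall A B C, stl R [Nab A; Nab B] C -> stl R [Nab (Tens A B)] C
| s_Limp : forall G P S A B C, stl R G A -> stl R (P ++ B :: S) C ->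
    stl R (P ++ G ++ Nab (Imp A B) :: S) C
| s_Rimp : forall G A B, stl R (A :: nabs G) B -> stl R G (Imp A B)
| s_P : forall G A, hasP R = true -> stl R G (Nab A) -> stl R G A
| s_F : forall G A, hasF R = true -> stl R G A -> stl R G (Nab A)
| s_wF : forall A, haswF R = true -> stl R [Nab A] Bot -> stl R [A] Bot
| s_weak : forall G B S A, stl R (G ++ S) A -> stl R (G ++ B :: S) A
| s_contr : forall G B S A, stl R (G ++ B :: B :: S) A -> stl R (G ++ B :: S) A
| s_exch : forall G B C S A, stl R (G ++ B :: C :: S) A -> stl R (G ++ C :: B :: S) A.

(* A locale, presented by its frame of opens: a complete lattice in which
   binary meets distribute over arbitrary joins. *)
Record locale := Locale {
  car :> Type;
  le : car -> car -> Prop;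
  le_refl : forall a, le a a;
  le_trans : forall a b c, le a b -> le b c -> le a c;
  le_antisym : forall a b, le a b -> le b a -> a = b;
  meet : car -> car -> car;
  meet_glb : forall a b c, le c (meet a b) <-> (le c a /\ le c b);
  sup : (car -> Prop) -> car;
  sup_lub : forall (S : car -> Prop) c, le (sup S) c <-> (forall s, S s -> le s c);
  meet_sup_distr : forall a (S : car -> Prop),
    meet a (sup S) = sup (fun x => exists s, S s /\ x = meet a s)
}.

Definition ltop (X : locale) : X := sup X (fun _ => True).
Definition lbot (X : locale) : X := sup X (fun _ => False).
Definition ljoin (X : locale) (a b : X) : X := sup X (fun x => x = a \/ x = b).

Record spacetime := Spacetime {
  st_loc :> locale;
  nab : st_loc -> st_loc;
  nab_join : forall S : st_loc -> Prop,
    nab (sup st_loc S) = sup st_loc (fun y => exists s, S s /\ y = nab s)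
}.

(* The implication: the right adjoint, a /\ nab b <= c  iff  b <= a -> c *)
Definition stimp (X : spacetime) (a c : X) : X :=
  sup X (fun b => le X (meet X a (nab X b)) c).

Fixpoint sval (X : spacetime) (v : nat -> X) (A : form) : X :=
  match A with
  | Var n => v n
  | Top => ltop X
  | One => ltop X
  | Bot => lbot X
  | And A B => meet X (sval X v A) (sval X v B)
  | Tens A B => meet X (sval X v A) (sval X v B)
  | Or A B => ljoin X (sval X v A) (sval X v B)
  | Imp A B => stimp X (sval X v A) (sval X v B)
  | Nab A => nab X (sval X v A)
  end.

Definition meet_list (X : spacetime) (v : nat -> X) (G : list form) : X :=
  fold_right (fun A acc => meet X (sval X v A) acc) (ltop X) G.

Definition in_iST (R : schemes) (X : spacetime) : Prop :=
  (hasP R = true -> forall a : X, le X (nab X a) a) /\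
  (hasF R = true -> forall a : X, le X a (nab X a)) /\
  (haswF R = true -> forall a : X, nab X a = lbot X -> a = lbot X).

Definition iST_valid (R : schemes) (G : list form) (A : form) : Prop :=
  forall (X : spacetime) (v : nat -> X), in_iST R X ->
    le X (meet_list X v G) (sval X v A).

Record kmodel := KModel {
  world : Type;
  kle : world -> world -> Prop;
  kle_refl : forall u, kle u u;
  kle_trans : forall u v w, kle u v -> kle v w -> kle u w;
  kle_antisym : forall u v, kle u v -> kle v u -> u = v;
  krel : world -> world -> Prop;
  krel_mono : forall u v u' v', krel u v -> kle u' u -> kle v v' -> krel u' v';
  kval : nat -> world -> Prop;
  kval_up : forall n u v, kle u v -> kval n u -> kval n v
}.

Fixpoint forces (M : kmodel) (w : world M) (A : form) : Prop :=
  match A with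
  | Var n => kval M n w
  | Top => True
  | One => True
  | Bot => False
  | And A B => forces M w A /\ forces M w B
  | Tens A B => forces M w A /\ forces M w B
  | Or A B => forces M w A \/ forces M w B
  | Imp A B => forall v, krel M w v -> forces M v A -> forces M v B
  | Nab A => exists v, krel M v w /\ forces M v A
  end.

Definition in_K (R : schemes) (M : kmodel) : Prop :=
  (hasP R = true -> forall u v, krel M u v -> kle M u v) /\
  (hasF R = true -> forall u, krel M u u) /\
  (haswF R = true -> forall u, exists v, krel M u v).

Definition K_valid (R : schemes) (G : list form) (A : form) : Prop :=
  forall (M : kmodel), in_K R M ->
    forall w : world M, (forall B, In B G -> forces M w B) -> forces M w A.

Definition four_equiv (L : ndlogic) (R : schemes) (G : list pform) (A : pform) : Prop :=
  (nd L G A <-> stl R (map emb G) (emb A)) /\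
  (stl R (map emb G) (emb A) <-> iST_valid R (map emb G) (emb A)) /\
  (iST_valid R (map emb G) (emb A) <-> K_valid R (map emb G) (emb A)).

(* Main.v *)
Require Import Defs.
From Stdlib Require Import List Permutation Classical FunctionalExtensionality PropExtensionality ProofIrrelevance Cantor Lia.
Import ListNotations.

Lemma stl_perm_app R B : forall l l', Permutation l l' ->
  forall G, stl R (G ++ l) B -> stl R (G ++ l') B.
Proof.
  intros l l' HP; induction HP; intros G H; auto.
  - replace (G ++ x :: l') with ((G ++ [x]) ++ l') by (rewrite <- app_assoc; reflexivity).
    apply IHHP. rewrite <- app_assoc. exact H.
  - apply s_exch. exact H.
Qed.

Lemma stl_perm R B l l' : Permutation l l' -> stl R l B -> stl R l' B.
Proof. intros HP H. apply (stl_perm_app R B l l' HP [] H). Qed.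

Lemma stl_weak_r R B Y Z : stl R Y B -> stl R (Y ++ Z) B.
Proof.
  intros H; induction Z.
  - rewrite app_nil_r; exact H.
  - apply s_weak. exact IHZ.
Qed.

Lemma stl_contr_incl R B : forall Y Z, incl Y Z -> stl R (Y ++ Z) B -> stl R Z B.
Proof.
  induction Y as [|y Y IH]; intros Z Hi H; [exact H|].
  apply IH; [intros x Hx; apply Hi; right; exact Hx|].
  assert (Hy : In y Z) by (apply Hi; left; reflexivity).
  destruct (in_split _ _ Hy) as [Z1 [Z2 ->]].
  replace (Y ++ Z1 ++ y :: Z2) with ((Y ++ Z1) ++ y :: Z2) by (rewrite app_assoc; reflexivity).
  apply s_contr.
  apply (stl_perm R B (y :: Y ++ Z1 ++ y :: Z2)); [|exact H].
  replace (Y ++ Z1 ++ y :: Z2) with ((Y ++ Z1) ++ y :: Z2) by (rewrite app_assoc; reflexivity).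
  replace ((Y ++ Z1) ++ y :: y :: Z2) with ((Y ++ Z1) ++ y :: (y :: Z2)) by reflexivity.
  apply Permutation_middle.
Qed.

Lemma stl_incl R B Y Z : stl R Y B -> incl Y Z -> stl R Z B.
Proof. intros H Hi. apply (stl_contr_incl R B Y Z Hi). apply stl_weak_r. exact H. Qed.

Lemma stl_cut1 R Y E F : stl R Y E -> stl R [E] F -> stl R Y F.
Proof.
  intros H1 H2. pose proof (@s_cut R Y [] [] E F H1 H2) as H. simpl in H.
  rewrite app_nil_r in H. exact H.
Qed.

Lemma stl_cut_ctx R G E F : stl R G E -> stl R (E :: G) F -> stl R G F.
Proof.
  intros H1 H2. pose proof (@s_cut R G [] G E F H1 H2) as H. simpl in H.
  apply (stl_contr_incl R F G G (incl_refl _) H).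
Qed.

Lemma stl_cut2 R G X Y Z : stl R G X -> stl R G Y -> stl R [X; Y] Z -> stl R G Z.
Proof.
  intros H1 H2 H3.
  pose proof (@s_cut R G [] [Y] X Z H1 H3) as H4. simpl in H4.
  pose proof (@s_cut R G G [] Y Z H2 H4) as H5. rewrite app_nil_r in H5.
  apply (stl_contr_incl R Z G G (incl_refl _) H5).
Qed.

Lemma limp_basic R a b : stl R [a; Nab (Imp a b)] b.
Proof. exact (@s_Limp R [a] [] [] a b b (s_id R a) (s_id R b)). Qed.

Lemma stl_nabs R (HP : hasP R = true) a : forall G P, stl R (P ++ G) a -> stl R (P ++ nabs G) a.
Proof.
  induction G as [|g G IH]; intros P H; [exact H|].
  simpl. pose proof (@s_cut R [Nab g] P G g a (@s_P R [Nab g] g HP (s_id R _)) H) as H1.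
  replace (P ++ Nab g :: nabs G) with ((P ++ [Nab g]) ++ nabs G) by (rewrite <- app_assoc; reflexivity).
  apply IH. rewrite <- app_assoc. exact H1.
Qed.

Lemma nd_to_stl L R (HE : ruleE L = true -> haswF R = true)
  (HM : ruleMP L = true -> hasF R = true) (HC : ruleCur L = true -> hasP R = true) :
  forall G A, nd L G A -> stl R (map emb G) (emb A).
Proof.
  intros G A H; induction H; simpl in *.
  - apply (stl_incl R _ [emb A]); [apply s_id|].
    intros x [<-|[]]. apply in_map. exact H.
  - apply s_top.
  - apply (stl_cut1 R _ Bot); [exact IHnd|]. exact (@s_bot R [] [] (emb A)).
  - apply (stl_cut_ctx R _ (Or (emb A) (emb B))); [exact IHnd1|].
    exact (@s_Lor R [] (emb A) (emb B) (map emb G) (emb C) IHnd2 IHnd3).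
  - apply s_Ror0; auto.
  - apply s_Ror1; auto.
  - apply (stl_cut1 R _ _ _ IHnd). exact (@s_Land0 R [] (emb A) (emb B) [] (emb A) (s_id R _)).
  - apply (stl_cut1 R _ _ _ IHnd). exact (@s_Land1 R [] (emb A) (emb B) [] (emb B) (s_id R _)).
  - apply s_Rand; auto.
  - apply s_Rimp. apply (stl_incl R _ _ _ IHnd). intros x [<-|[]]. left; reflexivity.
  - eapply (stl_cut2 R _ _ _ _ IHnd1 IHnd2). apply s_Rimp. simpl. apply s_Rand.
    + apply (stl_incl R _ _ _ (limp_basic R (emb A) (emb B))). intros x [<-|[<-|[]]]; simpl; auto.
    + apply (stl_incl R _ _ _ (limp_basic R (emb A) (emb C))). intros x [<-|[<-|[]]]; simpl; auto.
  - eapply (stl_cut2 R _ _ _ _ IHnd1 IHnd2). apply s_Rimp. simpl.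
    apply (@s_Lor R [] (emb A) (emb B)); simpl.
    + apply (stl_incl R _ _ _ (limp_basic R (emb A) (emb C))). intros x [<-|[<-|[]]]; simpl; auto.
    + apply (stl_incl R _ _ _ (limp_basic R (emb B) (emb C))). intros x [<-|[<-|[]]]; simpl; auto.
  - eapply (stl_cut2 R _ _ _ _ IHnd1 IHnd2). apply s_Rimp. simpl.
    exact (@s_Limp R [emb A; Nab (Imp (emb A) (emb B))] [] [] (emb B) (emb C) (emb C)
             (limp_basic R _ _) (s_id R _)).
  - apply (stl_cut1 R _ _ _ IHnd). apply s_wF; auto.
    exact (@s_Limp R [] [] [] Top Bot Bot (s_top R []) (@s_bot R [] [] Bot)).
  - eapply (stl_cut2 R _ _ _ _ IHnd1 IHnd2).
    exact (@s_cut R [Imp (emb A) (emb B)] [emb A] [] (Nab (Imp (emb A) (emb B))) (emb B)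
             (@s_F R _ _ (HM ltac:(assumption)) (s_id R _)) (limp_basic R _ _)).
  - apply s_Rimp. apply (stl_incl R _ (nabs (map emb G))).
    + apply (stl_nabs R (HC ltac:(assumption)) (emb A) (map emb G) []). exact IHnd.
    + intros x Hx; right; exact Hx.
Qed.


Lemma Lmeet_l (X : locale) (a b : X) : le X (meet X a b) a.
Proof. apply (proj1 (meet_glb X a b (meet X a b)) (le_refl X _)). Qed.
Lemma Lmeet_r (X : locale) (a b : X) : le X (meet X a b) b.
Proof. apply (proj1 (meet_glb X a b (meet X a b)) (le_refl X _)). Qed.
Lemma Lmeet_i (X : locale) (a b c : X) : le X c a -> le X c b -> le X c (meet X a b).
Proof. intros; apply (proj2 (meet_glb X a b c)); auto. Qed.
Lemma Lsup_ub (X : locale) (S : X -> Prop) s : S s -> le X s (sup X S).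
Proof. intros H. apply (proj1 (sup_lub X S (sup X S)) (le_refl X _)). exact H. Qed.
Lemma Lsup_l (X : locale) (S : X -> Prop) c : (forall s, S s -> le X s c) -> le X (sup X S) c.
Proof. intros H. apply (proj2 (sup_lub X S c)). exact H. Qed.
Lemma Ltop (X : locale) (a : X) : le X a (ltop X).
Proof. apply Lsup_ub. exact I. Qed.
Lemma Lbot (X : locale) (a : X) : le X (lbot X) a.
Proof. apply Lsup_l. intros s []. Qed.
Lemma Ljoin_l (X : locale) (a b : X) : le X a (ljoin X a b).
Proof. apply Lsup_ub. left; reflexivity. Qed.
Lemma Ljoin_r (X : locale) (a b : X) : le X b (ljoin X a b).
Proof. apply Lsup_ub. right; reflexivity. Qed.
Lemma Ljoin_lub (X : locale) (a b c : X) : le X a c -> le X b c -> le X (ljoin X a b) c.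
Proof. intros. apply Lsup_l. intros s [->| ->]; auto. Qed.

Lemma nab_mono (X : spacetime) (a b : X) : le X a b -> le X (nab X a) (nab X b).
Proof.
  intros H.
  assert (E : ljoin X a b = b).
  { apply le_antisym; [apply Ljoin_lub; [exact H| apply le_refl]| apply Ljoin_r]. }
  rewrite <- E. unfold ljoin. rewrite nab_join. apply Lsup_ub. exists a. split; auto.
Qed.

Lemma adj1 (X : spacetime) (a b c : X) : le X b (stimp X a c) -> le X (meet X a (nab X b)) c.
Proof.
  intros H. apply (le_trans X _ (meet X a (nab X (stimp X a c)))).
  - apply Lmeet_i; [apply Lmeet_l|]. apply (le_trans X _ (nab X b)); [apply Lmeet_r|].
    apply nab_mono; exact H.
  - unfold stimp. rewrite nab_join, meet_sup_distr. apply Lsup_l.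
    intros s [y [[s' [Hs' ->]] ->]]. exact Hs'.
Qed.

Lemma adj2 (X : spacetime) (a b c : X) : le X (meet X a (nab X b)) c -> le X b (stimp X a c).
Proof. intros H. apply Lsup_ub. exact H. Qed.

Lemma Ldistr (X : locale) (z a b : X) : le X z (ljoin X a b) ->
  le X z (ljoin X (meet X z a) (meet X z b)).
Proof.
  intros H. apply (le_trans X _ (meet X z (ljoin X a b))).
  - apply Lmeet_i; [apply le_refl| exact H].
  - unfold ljoin at 1. rewrite meet_sup_distr. apply Lsup_l.
    intros s [s' [[-> | ->] ->]]; [apply Ljoin_l| apply Ljoin_r].
Qed.

Ltac fdec := repeat (rewrite ?Forall_app, ?Forall_cons_iff in *); 
  repeat match goal with H : _ /\ _ |- _ => destruct H end.
Ltac fsplit := repeat (rewrite ?Forall_app, ?Forall_cons_iff); repeat split; auto.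
Ltac viah := match goal with Hb : Defs.le ?X ?z ?t |- Defs.le ?X ?z _ => apply (le_trans X _ _ _ Hb) end.
Ltac viahs := match goal with Hb : Defs.le ?X ?z ?t |- Defs.le ?X ?z _ => apply (le_trans X _ _ _ Hb); simpl; solve [auto using Lmeet_l, Lmeet_r, Lbot, nab_mono, le_refl] end.

Lemma stl_sound_gen R (X : spacetime) (v : nat -> X) (HX : in_iST R X) :
  forall Y B, stl R Y B -> forall z, Forall (fun y => le X z (sval X v y)) Y ->
  le X z (sval X v B).
Proof.
  destruct HX as [HP [HF HW]].
  intros Y B H; induction H; intros z Hz; simpl in *; fdec; simpl in *.
  - exact H.
  - apply Ltop.
  - apply Ltop.
  - apply Ltop.
  - viahs.
  - apply IHstl2. fsplit.
  - apply IHstl. fsplit. viahs.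
  - apply IHstl. fsplit. viahs.
  - apply Lmeet_i; auto.
  - match goal with Hb : Defs.le _ z (ljoin _ _ _) |- _ => apply (le_trans X _ _ _ (Ldistr X _ _ _ Hb)) end. apply Ljoin_lub.
    + apply IHstl1. fsplit.
      * eapply Forall_impl; [|eassumption]. intros a Ha. apply (le_trans X _ z); [apply Lmeet_l|exact Ha].
      * apply Lmeet_r.
      * eapply Forall_impl; [|eassumption]. intros a Ha. apply (le_trans X _ z); [apply Lmeet_l|exact Ha].
    + apply IHstl2. fsplit.
      * eapply Forall_impl; [|eassumption]. intros a Ha. apply (le_trans X _ z); [apply Lmeet_l|exact Ha].
      * apply Lmeet_r.
      * eapply Forall_impl; [|eassumption]. intros a Ha. apply (le_trans X _ z); [apply Lmeet_l|exact Ha].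
  - apply (le_trans X _ _ _ (IHstl z Hz)). apply Ljoin_l.
  - apply (le_trans X _ _ _ (IHstl z Hz)). apply Ljoin_r.
  - apply IHstl. fsplit.
  - apply IHstl. fsplit; viahs.
  - apply Lmeet_i; auto.
  - viah. apply nab_mono. apply IHstl. fsplit. apply le_refl.
  - apply IHstl. fsplit.
    + viah. apply nab_mono. apply Lmeet_l.
    + viah. apply nab_mono. apply Lmeet_r.
  - apply IHstl2. fsplit.
    apply (le_trans X _ (meet X (sval X v A) (nab X (stimp X (sval X v A) (sval X v B))))).
    + apply Lmeet_i; [apply IHstl1; fsplit| assumption].
    + apply adj1. apply le_refl.
  - apply adj2. apply IHstl. fsplit.
    + apply Lmeet_l.
    + unfold nabs. apply Forall_map. eapply Forall_impl; [|exact Hz].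
      intros a Ha. apply (le_trans X _ (nab X z)); [apply Lmeet_r|]. apply nab_mono; exact Ha.
  - apply (le_trans X _ _ _ (IHstl z Hz)). apply HP; auto.
  - apply (le_trans X _ _ _ (IHstl z Hz)). apply HF; auto.
  - assert (E : nab X (sval X v A) = lbot X).
    { apply le_antisym; [apply IHstl; fsplit; apply le_refl| apply Lbot]. }
    rewrite <- (HW ltac:(assumption) _ E). assumption.
  - apply IHstl. fsplit.
  - apply IHstl. fsplit.
  - apply IHstl. fsplit.
Qed.

Lemma stl_sound R Y B : stl R Y B -> iST_valid R Y B.
Proof.
  intros H X v HX. apply (stl_sound_gen R X v HX Y B H).
  clear H. induction Y as [|y Y IH]; constructor; simpl.
  - apply Lmeet_l.
  - eapply Forall_impl; [|exact IH]. intros a Ha. apply (le_trans X _ _ _ (Lmeet_r X _ _) Ha).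
Qed.


Definition upset (M : kmodel) (U : world M -> Prop) : Prop :=
  forall u v, kle M u v -> U u -> U v.

Definition UP (M : kmodel) := {U : world M -> Prop | upset M U}.

Lemma UP_eq (M : kmodel) (a b : UP M) :
  (forall w, proj1_sig a w <-> proj1_sig b w) -> a = b.
Proof.
  destruct a as [a Ha], b as [b Hb]; simpl; intros H.
  assert (a = b) by (apply functional_extensionality; intros w; apply propositional_extensionality; auto).
  subst b. f_equal. apply proof_irrelevance.
Qed.

Definition UPle (M : kmodel) (a b : UP M) : Prop := forall w, proj1_sig a w -> proj1_sig b w.

Definition UPmeet (M : kmodel) (a b : UP M) : UP M.
Proof.
  exists (fun w => proj1_sig a w /\ proj1_sig b w).
  intros u v Huv [H1 H2]; split; [apply (proj2_sig a u v Huv H1)|apply (proj2_sig b u v Huv H2)].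
Defined.

Definition UPsup (M : kmodel) (S : UP M -> Prop) : UP M.
Proof.
  exists (fun w => exists s, S s /\ proj1_sig s w).
  intros u v Huv [s [Hs H]]. exists s; split; [exact Hs| apply (proj2_sig s u v Huv H)].
Defined.

Definition UPnab (M : kmodel) (a : UP M) : UP M.
Proof.
  exists (fun w => exists u, krel M u w /\ proj1_sig a u).
  intros w w' Hw [u [Hu H]]. exists u; split; [|exact H].
  apply (krel_mono M u w u w' Hu (kle_refl M u) Hw).
Defined.

Definition UPloc (M : kmodel) : locale.
Proof.
  refine (@Locale (UP M) (UPle M) _ _ _ (UPmeet M) _ (UPsup M) _ _).
  - intros a w H; exact H.
  - intros a b c H1 H2 w H; auto.
  - intros a b H1 H2; apply UP_eq; split; auto.
  - intros a b c; unfold UPle; simpl; split.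
    + intros H; split; intros w Hw; apply (H w Hw).
    + intros [H1 H2] w Hw; split; auto.
  - intros S c; unfold UPle; simpl; split.
    + intros H s Hs w Hw. apply H. exists s; auto.
    + intros H w [s [Hs Hw]]. apply (H s Hs w Hw).
  - intros a S. apply UP_eq; simpl. intros w; split.
    + intros [Ha [s [Hs Hw]]]. exists (UPmeet M a s). split; [exists s; auto| simpl; auto].
    + intros [x [[s [Hs ->]] [Ha Hw]]]. split; [exact Ha| exists s; auto].
Defined.

Definition UPst (M : kmodel) : spacetime.
Proof.
  refine (@Spacetime (UPloc M) (UPnab M) _).
  intros S. apply UP_eq; simpl. intros w; split.
  - intros [u [Hu [s [Hs Hsu]]]]. exists (UPnab M s). split; [exists s; auto| simpl; exists u; auto].
  - intros [y [[s [Hs ->]] [u [Hu Hsu]]]]. exists u. split; [exact Hu| exists s; auto].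
Defined.

Lemma forces_up (M : kmodel) : forall A u v, kle M u v -> forces M u A -> forces M v A.
Proof.
  induction A; intros u v Huv H; simpl in *.
  - apply (kval_up M n u v Huv H).
  - exact I.
  - exact H.
  - exact I.
  - destruct H; split; eauto.
  - destruct H; [left|right]; eauto.
  - intros x Hx. apply H. apply (krel_mono M v x u x Hx Huv (kle_refl M x)).
  - destruct H; split; eauto.
  - destruct H as [x [Hx H]]. exists x. split; [|exact H].
    apply (krel_mono M x u x v Hx (kle_refl M x) Huv).
Qed.

Definition UPval (M : kmodel) (n : nat) : UP M :=
  exist (upset M) (kval M n) (kval_up M n).

Definition UPforce (M : kmodel) (A : form) : UP M :=
  exist (upset M) (fun w => forces M w A) (forces_up M A).

Lemma UP_truth (M : kmodel) : forall A w,
  proj1_sig (sval (UPst M) (UPval M) A) w <-> forces M w A.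
Proof.
  induction A; intros w; simpl.
  - tauto.
  - split; [auto| intros _]. exists (UPforce M Top). split; simpl; auto.
  - split; [intros [s [[] _]]| intros []].
  - split; [auto| intros _]. exists (UPforce M Top). split; simpl; auto.
  - rewrite IHA1, IHA2. tauto.
  - split.
    + intros [s [[-> | ->] Hs]]; [left; apply IHA1| right; apply IHA2]; exact Hs.
    + intros [H|H]; [exists (sval (UPst M) (UPval M) A1)| exists (sval (UPst M) (UPval M) A2)];
        split; auto; [apply IHA1| apply IHA2]; exact H.
  - split.
    + intros [b [Hb Hw]] v Hv HA. apply IHA2. apply Hb. simpl. split.
      * apply IHA1; exact HA.
      * exists w; auto.
    + intros H. exists (UPforce M (Imp A1 A2)). split; [|exact H].
      intros x [Hx [u [Hu Hu2]]]. apply IHA2. simpl in Hu2. apply (Hu2 x Hu). apply IHA1; exact Hx.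
  - rewrite IHA1, IHA2. tauto.
  - split.
    + intros [u [Hu H]]. exists u. split; [exact Hu| apply IHA; exact H].
    + intros [u [Hu H]]. exists u. split; [exact Hu| apply IHA; exact H].
Qed.

Lemma UP_in_iST R (M : kmodel) : in_K R M -> in_iST R (UPst M).
Proof.
  intros [HP [HF HW]]. split; [|split].
  - intros H a w [u [Hu Ha]]. apply (proj2_sig a u w (HP H u w Hu) Ha).
  - intros H a w Ha. exists w. split; [apply HF; auto| exact Ha].
  - intros H a E. apply UP_eq. intros w; split.
    + intros Hw. destruct (HW H w) as [u Hu].
      assert (Hn : proj1_sig (nab (UPst M) a) u) by (exists w; auto).
      rewrite E in Hn. destruct Hn as [s [[] _]].
    + intros [s [[] _]].
Qed.

Lemma iST_to_K R Y B : iST_valid R Y B -> K_valid R Y B.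
Proof.
  intros H M HM w Hw.
  pose proof (H (UPst M) (UPval M) (UP_in_iST R M HM)) as H1.
  apply (UP_truth M B w). apply H1.
  clear H H1. induction Y as [|y Y IH]; simpl.
  - exists (UPforce M Top). split; simpl; auto.
  - split.
    + apply UP_truth. apply Hw. left; reflexivity.
    + apply IH. intros b Hb. apply Hw. right; exact Hb.
Qed.


Lemma nd_weak L : forall Y E, nd L Y E -> forall Y', incl Y Y' -> nd L Y' E.
Proof.
  intros Y E H; induction H; intros Y' Hi.
  - apply nd_ax. apply Hi; exact H.
  - apply nd_top.
  - apply nd_bot; auto.
  - apply (@nd_orE L Y' A B C); auto.
    + apply IHnd2. intros x [<-|Hx]; [left; reflexivity| right; apply Hi; exact Hx].
    + apply IHnd3. intros x [<-|Hx]; [left; reflexivity| right; apply Hi; exact Hx].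
  - apply nd_orI0; auto.
  - apply nd_orI1; auto.
  - eapply nd_andE0; eauto.
  - eapply nd_andE1; eauto.
  - apply nd_andI; auto.
  - apply nd_impI; auto.
  - apply nd_andIf; auto.
  - apply nd_orEf; auto.
  - eapply nd_trf; eauto.
  - apply nd_E; auto.
  - eapply nd_MP; eauto.
  - apply nd_Cur; auto.
Qed.

Lemma nd_subst L : forall Z F, nd L Z F -> forall Y, (forall z, In z Z -> nd L Y z) -> nd L Y F.
Proof.
  intros Z F H; induction H; intros Y' Hi.
  - apply Hi; exact H.
  - apply nd_top.
  - apply nd_bot; auto.
  - apply (@nd_orE L Y' A B C); auto.
    + apply IHnd2. intros x [<-|Hx]; [apply nd_ax; left; reflexivity|].
      apply (nd_weak L Y'); [apply Hi; exact Hx| intros y Hy; right; exact Hy].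
    + apply IHnd3. intros x [<-|Hx]; [apply nd_ax; left; reflexivity|].
      apply (nd_weak L Y'); [apply Hi; exact Hx| intros y Hy; right; exact Hy].
  - apply nd_orI0; auto.
  - apply nd_orI1; auto.
  - eapply nd_andE0; eauto.
  - eapply nd_andE1; eauto.
  - apply nd_andI; auto.
  - apply nd_impI; auto.
  - apply nd_andIf; auto.
  - apply nd_orEf; auto.
  - eapply nd_trf; eauto.
  - apply nd_E; auto.
  - eapply nd_MP; eauto.
  - apply nd_Cur; auto.
Qed.

Lemma nd_cut L Y E F : nd L Y E -> nd L (E :: Y) F -> nd L Y F.
Proof.
  intros H1 H2. apply (nd_subst L _ _ H2). intros z [<-|Hz]; [exact H1| apply nd_ax; exact Hz].
Qed.

Fixpoint conj (Y : list pform) : pform :=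
  match Y with [] => PTop | y :: Y => PAnd y (conj Y) end.

Lemma conj_elim L : forall Y G y, nd L G (conj Y) -> In y Y -> nd L G y.
Proof.
  induction Y as [|a Y IH]; intros G y H Hy; [destruct Hy|].
  destruct Hy as [<-|Hy].
  - eapply nd_andE0; exact H.
  - apply (IH G y); [eapply nd_andE1; exact H| exact Hy].
Qed.

Lemma conj_intro L : forall Y G, (forall y, In y Y -> nd L G y) -> nd L G (conj Y).
Proof.
  induction Y as [|a Y IH]; intros G H; simpl.
  - apply nd_top.
  - apply nd_andI; [apply H; left; reflexivity| apply IH; intros y Hy; apply H; right; exact Hy].
Qed.

Lemma nd_conj_imp L Y E G : nd L Y E -> nd L G (PImp (conj Y) E).
Proof.
  intros H. apply nd_impI. apply (nd_subst L _ _ H).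
  intros z Hz. apply (conj_elim L Y); [apply nd_ax; left; reflexivity| exact Hz].
Qed.

Definition theory L (T : pform -> Prop) : Prop :=
  forall Y E, (forall y, In y Y -> T y) -> nd L Y E -> T E.

Lemma thy0 L T : theory L T -> forall E, nd L [] E -> T E.
Proof. intros HT E H. apply (HT [] E); [intros y []| exact H]. Qed.
Lemma thy1 L T : theory L T -> forall x E, T x -> nd L [x] E -> T E.
Proof. intros HT x E Hx H. apply (HT [x] E); [intros y [<-|[]]; exact Hx| exact H]. Qed.
Lemma thy2 L T : theory L T -> forall x y E, T x -> T y -> nd L [x; y] E -> T E.
Proof. intros HT x y E Hx Hy H. apply (HT [x; y] E); [intros z [<-|[<-|[]]]; assumption| exact H]. Qed.

Record derp (Der : list pform -> pform -> Prop) : Prop := {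
  d_mono : forall Y Y' E, Der Y E -> incl Y Y' -> Der Y' E;
  d_refl : forall Y E, In E Y -> Der Y E;
  d_cut : forall Y E F, Der Y E -> Der (E :: Y) F -> Der Y F;
  d_or : forall Y E E' F, Der (E :: Y) F -> Der (E' :: Y) F -> Der (POr E E' :: Y) F
}.

Definition SD (Der : list pform -> pform -> Prop) (S : pform -> Prop) (E : pform) : Prop :=
  exists Y, (forall y, In y Y -> S y) /\ Der Y E.

Lemma split_ctx (S : pform -> Prop) E : forall Y, (forall y, In y Y -> S y \/ y = E) ->
  exists Z, (forall z, In z Z -> S z) /\ incl Y (E :: Z).
Proof.
  induction Y as [|y Y IH]; intros H.
  - exists []. split; [intros z []| intros z []].
  - destruct IH as [Z [HZ Hi]]; [intros x Hx; apply H; right; exact Hx|].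
    destruct (H y (or_introl eq_refl)) as [Hy| ->].
    + exists (y :: Z). split.
      * intros z [<-|Hz]; auto.
      * intros x [<-|Hx]; [right; left; reflexivity|].
        destruct (Hi x Hx) as [<-|Hx']; [left; reflexivity| right; right; exact Hx'].
    + exists Z. split; [exact HZ|]. intros x [<-|Hx]; [left; reflexivity| apply Hi; exact Hx].
Qed.

Lemma SD_mono Der (S S' : pform -> Prop) E : (forall x, S x -> S' x) -> SD Der S E -> SD Der S' E.
Proof. intros H [Y [HY HD]]. exists Y. split; auto. Qed.

Lemma SD_cut Der (HD : derp Der) S E B :
  SD Der S E -> SD Der (fun y => S y \/ y = E) B -> SD Der S B.
Proof.
  intros [Y1 [H1 D1]] [Y2 [H2 D2]].
  destruct (split_ctx S E Y2 H2) as [Z [HZ Hi]].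
  exists (Z ++ Y1). split.
  - intros y Hy. apply in_app_iff in Hy. destruct Hy; auto.
  - apply (d_cut Der HD _ E).
    + apply (d_mono Der HD Y1); [exact D1| intros x Hx; apply in_app_iff; right; exact Hx].
    + apply (d_mono Der HD Y2); [exact D2|].
      intros x Hx. destruct (Hi x Hx) as [<-|Hx']; [left; reflexivity| right; apply in_app_iff; left; exact Hx'].
Qed.

Lemma SD_or Der (HD : derp Der) S E E' B :
  SD Der (fun y => S y \/ y = E) B -> SD Der (fun y => S y \/ y = E') B ->
  SD Der (fun y => S y \/ y = POr E E') B.
Proof.
  intros [Y1 [H1 D1]] [Y2 [H2 D2]].
  destruct (split_ctx S E Y1 H1) as [Z1 [HZ1 Hi1]].
  destruct (split_ctx S E' Y2 H2) as [Z2 [HZ2 Hi2]].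
  exists (POr E E' :: Z1 ++ Z2). split.
  - intros y [<-|Hy]; [right; reflexivity|]. left. apply in_app_iff in Hy. destruct Hy; auto.
  - apply (d_or Der HD).
    + apply (d_mono Der HD Y1); [exact D1|].
      intros x Hx. destruct (Hi1 x Hx) as [<-|Hx']; [left; reflexivity| right; apply in_app_iff; left; exact Hx'].
    + apply (d_mono Der HD Y2); [exact D2|].
      intros x Hx. destruct (Hi2 x Hx) as [<-|Hx']; [left; reflexivity| right; apply in_app_iff; right; exact Hx'].
Qed.

Fixpoint enc (A : pform) : nat :=
  match A with
  | PVar n => Cantor.to_nat (0, n)
  | PTop => Cantor.to_nat (1, 0)
  | PBot => Cantor.to_nat (2, 0)
  | PAnd a b => Cantor.to_nat (3, Cantor.to_nat (enc a, enc b))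
  | POr a b => Cantor.to_nat (4, Cantor.to_nat (enc a, enc b))
  | PImp a b => Cantor.to_nat (5, Cantor.to_nat (enc a, enc b))
  end.

Lemma to_nat_inj p q : Cantor.to_nat p = Cantor.to_nat q -> p = q.
Proof. intros H. rewrite <- (Cantor.cancel_of_to p), <- (Cantor.cancel_of_to q), H. reflexivity. Qed.

Lemma enc_inj : forall A B, enc A = enc B -> A = B.
Proof.
  induction A; destruct B; intros H; cbn [enc] in H; apply to_nat_inj in H;
    try discriminate; try reflexivity.
  all: pose proof (f_equal snd H) as H'; cbn [snd] in H'; try (subst; reflexivity).
  all: apply to_nat_inj in H'; pose proof (f_equal fst H') as H1; pose proof (f_equal snd H') as H2;
    cbn [fst snd] in H1, H2; f_equal; auto.
Qed.

Fixpoint chain Der (X : pform -> Prop) B (n : nat) : pform -> Prop :=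
  match n with
  | 0 => X
  | S n => fun x => chain Der X B n x \/
           (enc x = n /\ ~ SD Der (fun y => chain Der X B n y \/ y = x) B)
  end.

Lemma chain_mono Der X B : forall n m, n <= m -> forall x, chain Der X B n x -> chain Der X B m x.
Proof.
  intros n m H; induction H; intros x Hx; auto. simpl. left; auto.
Qed.

Lemma chain_fin Der X B : forall Y, (forall y, In y Y -> exists n, chain Der X B n y) ->
  exists N, forall y, In y Y -> chain Der X B N y.
Proof.
  induction Y as [|y Y IH]; intros H.
  - exists 0. intros y [].
  - destruct (H y (or_introl eq_refl)) as [n Hn].
    destruct IH as [N HN]; [intros z Hz; apply H; right; exact Hz|].
    exists (Nat.max n N). intros z [<-|Hz].
    + apply (chain_mono Der X B n); [lia| exact Hn].
    + apply (chain_mono Der X B N); [lia| apply HN; exact Hz].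
Qed.

Lemma chain_ok Der X B : ~ SD Der X B -> forall n, ~ SD Der (chain Der X B n) B.
Proof.
  intros H0 n; induction n; [exact H0|].
  intros [Y [HY HD]].
  destruct (classic (exists x0, In x0 Y /\ enc x0 = n /\
     ~ SD Der (fun y => chain Der X B n y \/ y = x0) B)) as [[x0 [Hin [He Hn]]]|Hno].
  - apply Hn. exists Y. split; [|exact HD].
    intros y Hy. destruct (HY y Hy) as [Hc|[He' Hn']]; [left; exact Hc|].
    right. apply enc_inj. congruence.
  - apply IHn. exists Y. split; [|exact HD].
    intros y Hy. destruct (HY y Hy) as [Hc|[He' Hn']]; [exact Hc|].
    exfalso. apply Hno. exists y. auto.
Qed.

Lemma lindenbaum Der (HD : derp Der) (X : pform -> Prop) B : ~ SD Der X B ->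
  exists T : pform -> Prop, (forall x, X x -> T x) /\ ~ T B /\
    (forall Y E, (forall y, In y Y -> T y) -> Der Y E -> T E) /\
    (forall a b, T (POr a b) -> T a \/ T b).
Proof.
  intros H0. set (T := fun x => exists n, chain Der X B n x).
  assert (HT : ~ SD Der T B).
  { intros [Y [HY HDY]]. destruct (chain_fin Der X B Y HY) as [N HN].
    apply (chain_ok Der X B H0 N). exists Y; auto. }
  assert (Hext : forall E, ~ T E -> SD Der (fun y => T y \/ y = E) B).
  { intros E HE. apply NNPP. intros Hn. apply HE. exists (S (enc E)). simpl. right. split; [reflexivity|].
    intros Hs. apply Hn. revert Hs. apply SD_mono. intros x [Hx|Hx]; [left; exists (enc E); exact Hx| right; exact Hx]. }
  assert (Hcl : forall Y E, (forall y, In y Y -> T y) -> Der Y E -> T E).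
  { intros Y E HY HDE. apply NNPP. intros HE. apply HT.
    apply (SD_cut Der HD T E); [exists Y; auto| apply Hext; exact HE]. }
  exists T. split; [|split; [|split]].
  - intros x Hx. exists 0. exact Hx.
  - intros HB. apply HT. exists [B]. split; [intros y [<-|[]]; exact HB| apply (d_refl Der HD); left; reflexivity].
  - exact Hcl.
  - intros a b Hab. apply NNPP. intros Hn. apply HT.
    apply (SD_cut Der HD T (POr a b)).
    + exists [POr a b]. split; [intros y [<-|[]]; exact Hab| apply (d_refl Der HD); left; reflexivity].
    + apply SD_or; auto; apply Hext; intros H'; apply Hn; auto.
Qed.


Lemma ax1 L G A : In A G -> nd L G A.
Proof. apply nd_ax. Qed.

Ltac inl := solve [apply nd_ax; simpl; auto].

Lemma derp_nd L : derp (nd L).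
Proof.
  constructor.
  - intros Y Y' E H Hi. apply (nd_weak L Y E H Y' Hi).
  - intros Y E H. apply nd_ax; exact H.
  - intros Y E F H1 H2. apply (nd_cut L Y E F H1 H2).
  - intros Y E E' F H1 H2. apply (@nd_orE L _ E E' F); [inl| |].
    + apply (nd_weak L _ _ H1). intros x [<-|Hx]; simpl; auto.
    + apply (nd_weak L _ _ H2). intros x [<-|Hx]; simpl; auto.
Qed.

Definition DerD (T : pform -> Prop) (Y : list pform) (E : pform) : Prop := T (PImp (conj Y) E).

Lemma derp_D L T : theory L T -> derp (DerD T).
Proof.
  intros HT. unfold DerD. constructor.
  - intros Y Y' E H Hi. apply (thy2 L T HT _ (PImp (conj Y') (conj Y)) _ H).
    + apply (thy0 L T HT). apply nd_impI. apply conj_intro. intros y Hy.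
      apply (conj_elim L Y'); [inl| apply Hi; exact Hy].
    + apply (@nd_trf L _ _ (conj Y)); inl.
  - intros Y E H. apply (thy0 L T HT). apply nd_conj_imp. apply nd_ax; exact H.
  - intros Y E F H1 H2. simpl in H2. apply (thy2 L T HT _ _ _ H1 H2).
    apply (@nd_trf L _ _ (PAnd E (conj Y))); [|inl].
    apply nd_andIf; [inl|]. apply nd_impI; inl.
  - intros Y E E' F H1 H2. simpl in *. apply (thy2 L T HT _ _ _ H1 H2).
    apply (@nd_trf L _ _ (POr (PAnd E (conj Y)) (PAnd E' (conj Y)))).
    + apply nd_impI. apply (@nd_orE L _ E E').
      * eapply nd_andE0; inl.
      * apply nd_orI0. apply nd_andI; [inl|]. eapply nd_andE1; inl.
      * apply nd_orI1. apply nd_andI; [inl|]. eapply nd_andE1; inl.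
    + apply nd_orEf; inl.
Qed.

Record wrld (L : ndlogic) := Wrld {
  th : pform -> Prop;
  th_thy : theory L th;
  th_prime : forall a b, th (POr a b) -> th a \/ th b;
  th_cons : ~ th PBot
}.
Arguments th {L} _ _.
Arguments th_thy {L} _ _ _ _ _.

Lemma wrld_eq L (a b : wrld L) : (forall x, th a x <-> th b x) -> a = b.
Proof.
  destruct a as [ta Ha Pa Ca], b as [tb Hb Pb Cb]; simpl. intros H.
  assert (ta = tb) by (apply functional_extensionality; intros; apply propositional_extensionality; auto).
  subst tb. f_equal; apply proof_irrelevance.
Qed.

Definition R0 L (D T : wrld L) : Prop := forall a b, th D (PImp a b) -> th T a -> th T b.

Definition cle L (D T : wrld L) : Prop := D = T \/ (ruleCur L = true /\ R0 L D T).

Lemma th_top L (D : wrld L) : th D PTop.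
Proof. apply (thy0 L _ (th_thy D)). apply nd_top. Qed.

Lemma R0_sub L (HC : ruleCur L = true) (D T : wrld L) x : R0 L D T -> th D x -> th T x.
Proof.
  intros H Hx. apply (H PTop x); [|apply th_top].
  apply (thy1 L _ (th_thy D) x _ Hx). apply nd_Cur; [exact HC| inl].
Qed.

Lemma R0_trans L (HC : ruleCur L = true) (D T U : wrld L) : R0 L D T -> R0 L T U -> R0 L D U.
Proof.
  intros H1 H2 a b Hab Ha. apply (H2 a b); [|exact Ha]. apply (R0_sub L HC D T _ H1 Hab).
Qed.

Lemma cle_trans L (a b c : wrld L) : cle L a b -> cle L b c -> cle L a c.
Proof.
  intros [->|[HC H1]] H2; auto.
  destruct H2 as [<-|[_ H2]]; [right; auto|].
  right; split; [exact HC| apply (R0_trans L HC a b c H1 H2)].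
Qed.

Lemma cle_antisym L (a b : wrld L) : cle L a b -> cle L b a -> a = b.
Proof.
  intros [->|[HC H1]] [E|[_ H2]]; auto.
  apply wrld_eq. intros x; split; intros Hx; [apply (R0_sub L HC a b x H1 Hx)| apply (R0_sub L HC b a x H2 Hx)].
Qed.

Lemma R0_mono L (u v u' v' : wrld L) : R0 L u v -> cle L u' u -> cle L v v' -> R0 L u' v'.
Proof.
  intros H H1 H2.
  assert (K : R0 L u' v).
  { destruct H1 as [E|[HC H1]]; [subst; exact H| apply (R0_trans L HC _ _ _ H1 H)]. }
  destruct H2 as [E|[HC H2]]; [subst; exact K| apply (R0_trans L HC _ _ _ K H2)].
Qed.

Lemma kval_up_c L n (u v : wrld L) : cle L u v -> th u (PVar n) -> th v (PVar n).
Proof. intros [<-|[HC H]] Hx; auto. apply (R0_sub L HC u v _ H Hx). Qed.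

Definition CM (L : ndlogic) : kmodel :=
  @KModel (wrld L) (cle L) (fun u => or_introl eq_refl) (cle_trans L) (cle_antisym L)
    (R0 L) (R0_mono L) (fun n w => th w (PVar n)) (kval_up_c L).

Lemma exist_succ L (D : wrld L) a b : ~ th D (PImp a b) ->
  exists T : wrld L, R0 L D T /\ th T a /\ ~ th T b.
Proof.
  intros Hn. pose proof (th_thy D) as HT.
  destruct (lindenbaum (DerD (th D)) (derp_D L _ HT) (fun x => x = a) b) as [T [HX [HB [Hcl Hpr]]]].
  - intros [Y [HY HDY]]. apply Hn. unfold DerD in HDY.
    apply (thy1 L _ HT _ _ HDY). apply (@nd_trf L _ _ (conj Y)); [|inl].
    apply nd_impI. apply conj_intro. intros y Hy. rewrite (HY y Hy). inl.
  - assert (Tthy : theory L T).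
    { intros Y E HY HE. apply (Hcl Y E HY). unfold DerD. apply (thy0 L _ HT). apply nd_conj_imp; exact HE. }
    assert (Tcons : ~ T PBot).
    { intros Hb. apply HB. apply (Tthy [PBot] b); [intros y [<-|[]]; exact Hb| apply nd_bot; inl]. }
    exists (Wrld L T Tthy Hpr Tcons). simpl. split; [|split; [apply HX; reflexivity| exact HB]].
    intros c d Hcd Hc. apply (Hcl [c] d); [intros y [<-|[]]; exact Hc|].
    unfold DerD; simpl. apply (thy1 L _ HT _ _ Hcd). apply (@nd_trf L _ _ c); [|inl].
    apply nd_impI. eapply nd_andE0; inl.
Qed.

Lemma truth L : forall A (D : wrld L), forces (CM L) D (emb A) <-> th D A.
Proof.
  induction A; intros D; simpl.
  - tauto.
  - split; [intros _; apply th_top| auto].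
  - split; [intros []| apply th_cons].
  - rewrite IHA1, IHA2. split.
    + intros [H1 H2]. apply (thy2 L _ (th_thy D) _ _ _ H1 H2). apply nd_andI; inl.
    + intros H; split; apply (thy1 L _ (th_thy D) _ _ H); [eapply nd_andE0| eapply nd_andE1]; inl.
  - rewrite IHA1, IHA2. split.
    + intros [H|H]; apply (thy1 L _ (th_thy D) _ _ H); [apply nd_orI0| apply nd_orI1]; inl.
    + apply th_prime.
  - split.
    + intros H. apply NNPP. intros Hn. destruct (exist_succ L D A1 A2 Hn) as [T [HR [Ha Hb]]].
      apply Hb. apply IHA2. apply H; [exact HR| apply IHA1; exact Ha].
    + intros H T HR Ha. apply IHA2. apply (HR A1 A2 H). apply IHA1; exact Ha.
Qed.

Lemma CM_in_K L R (HE : haswF R = true -> ruleE L = true)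
  (HM : hasF R = true -> ruleMP L = true) (HC : hasP R = true -> ruleCur L = true) :
  in_K R (CM L).
Proof.
  split; [|split]; simpl.
  - intros H u v Huv. right. split; [apply HC; exact H| exact Huv].
  - intros H u a b Hab Ha. apply (thy2 L _ (th_thy u) _ _ _ Hab Ha).
    apply (@nd_MP L _ a b (HM H)); inl.
  - intros H u. assert (Hn : ~ th u (PImp PTop PBot)).
    { intros Hx. apply (th_cons L u). apply (thy1 L _ (th_thy u) _ _ Hx). apply nd_E; [apply HE; exact H| inl]. }
    destruct (exist_succ L u PTop PBot Hn) as [T [HR _]]. exists T. exact HR.
Qed.

Lemma K_complete L R (HE : haswF R = true -> ruleE L = true)
  (HM : hasF R = true -> ruleMP L = true) (HC : hasP R = true -> ruleCur L = true) G A :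
  K_valid R (map emb G) (emb A) -> nd L G A.
Proof.
  intros HK. apply NNPP. intros Hn.
  destruct (lindenbaum (nd L) (derp_nd L) (fun x => In x G) A) as [T [HX [HB [Hcl Hpr]]]].
  - intros [Y [HY HD]]. apply Hn. apply (nd_weak L Y A HD G). exact HY.
  - assert (Tcons : ~ T PBot).
    { intros Hb. apply HB. apply (Hcl [PBot] A); [intros y [<-|[]]; exact Hb| apply nd_bot; inl]. }
    set (D := Wrld L T Hcl Hpr Tcons).
    apply HB. apply (truth L A D). apply (HK (CM L) (CM_in_K L R HE HM HC) D).
    intros B HBin. apply in_map_iff in HBin. destruct HBin as [g [<- Hg]].
    apply (truth L g D). simpl. apply HX. exact Hg.
Qed.


Lemma generic L R (HE : ruleE L = haswF R) (HM : ruleMP L = hasF R) (HC : ruleCur L = hasP R) G A :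
  four_equiv L R G A.
Proof.
  assert (a : nd L G A -> stl R (map emb G) (emb A)).
  { apply nd_to_stl; congruence. }
  assert (d : K_valid R (map emb G) (emb A) -> nd L G A).
  { apply K_complete; congruence. }
  pose proof (stl_sound R (map emb G) (emb A)) as b.
  pose proof (iST_to_K R (map emb G) (emb A)) as c.
  unfold four_equiv; split; [|split]; split; auto.
Qed.

Theorem theorem9p4 : forall (G : list pform) (A : pform),
  four_equiv KPC  R_none G A /\
  four_equiv EKPC R_wF   G A /\
  four_equiv KTPC R_F    G A /\
  four_equiv BPC  R_P    G A /\
  four_equiv EBPC R_PwF  G A /\
  four_equiv IPC  R_PF   G A.
Proof.
  intros G A. refine (Logic.conj _ (Logic.conj _ (Logic.conj _ (Logic.conj _ (Logic.conj _ _))))); apply generic; reflexivity.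
Qed.
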